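(* Let $\omega_0\neq 0$ and let $u_x,u_y,u_z$ be arbitrary (bounded measurable) real functions of time. Consider the system $$\dot b_x=-\omega_0c_y-u_zb_y+u_yb_z,\quad \dot b_y=\omega_0c_x+u_zb_x-u_xb_z,\quad \dot b_z=u_xb_y-u_yb_x,$$ $$\dot c_x=-\omega_0b_y+u_yc_z-u_zc_y,\quad \dot c_y=\omega_0b_x-u_xc_z+u_zc_x,\quad \dot c_z=u_xc_y-u_yc_x.$$ Then along every solution the quantities $$E=\frac{\omega_0^2}{2}\sum_{k=x,y,z}(b_k^2+c_k^2),\qquad L=\omega_0\sum_{k=x,y,z}b_kc_k$$ are constant in time.
   Context: Solutions are understood as absolutely continuous real functions $b_k(t),c_k(t)$, $k=x,y,z$, satisfying the equations almost everywhere. *)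

(* Defs.v *)
From HB Require Import structures.
From mathcomp Require Import all_boot all_order all_algebra.
From mathcomp Require Import all_classical all_reals all_analysis.
Set Implicit Arguments. Unset Strict Implicit. Unset Printing Implicit Defensive.
Import Order.TTheory GRing.Theory Num.Theory.
Import numFieldNormedType.Exports.
Local Open Scope classical_set_scope.
Local Open Scope ring_scope.

Definition abs_cont_on (R : realType) (a b : R) (f : R -> R) : Prop :=
  forall eps : R, 0 < eps -> exists2 del : R, 0 < del &
    forall (n : nat) (x y : 'I_n -> R),
      (forall i, a <= x i /\ x i <= y i /\ y i <= b) ->
      (forall i j, i != j -> y i <= x j \/ y j <= x i) ->
      \sum_(i < n) (y i - x i) < del ->
      \sum_(i < n) `|f (y i) - f (x i)| < eps.

Definition ae_deriv_on (R : realType) (a b : R) (f g : R -> R) : Prop :=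
  {ae (@lebesgue_measure R), forall t : R, t \in `[a, b] ->
      derivable f t 1 /\ derive1 f t = g t}.

Definition bdd_meas (R : realType) (u : R -> R) : Prop :=
  measurable_fun [set: R] u /\ exists M : R, forall t, `|u t| <= M.

(* Main.v *)
Require Import Defs.
From HB Require Import structures.
From mathcomp Require Import all_boot all_order all_algebra.
From mathcomp Require Import all_classical all_reals all_analysis.
From mathcomp Require Import ring lra measurable_realfun.
Import Order.TTheory GRing.Theory Num.Theory.
Import numFieldNormedType.Exports.
Local Open Scope classical_set_scope.
Local Open Scope ring_scope.

Definition novl (R : realType) (p q : R * R) : bool := (p.2 <= q.1) || (q.2 <= p.1).

Section K.
Variables (R : realType) (a : R) (f : R -> R) (U : set R) (e : R).
Let mu := @lebesgue_measure R.
Definition PP (s : R) := exists l : seq (R * R),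
  [/\ (forall p, p \in l -> a <= p.1 /\ p.1 <= p.2 /\ p.2 <= s),
      pairwise (@novl R) l,
      ((\sum_(p <- l) (p.2 - p.1))%:E <= mu (U `&` `[a, s[))%E &
      `|f s - f a| <= e * (s - a) + \sum_(p <- l) `|f p.2 - f p.1| ].

Lemma PP_ext (s r : R) : 0 <= e -> measurable U -> a <= s -> s <= r -> `[s, r[ `<=` U -> PP s -> PP r.
Proof.
move=> e0 mU as_ sr sU [l [H1 H2 H3 H4]].
exists ((s, r) :: l); split.
- move=> p; rewrite inE => /orP[/eqP -> /=|pl]; first by split.
  have [? [? ?]] := H1 p pl; split=> //; split=> //; exact: le_trans sr.
- rewrite /= H2 andbT; apply/allP => q ql; rewrite /novl /=.
  have [_ [_ ->]] := H1 q ql; by rewrite orbT.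
- rewrite big_cons /= EFinD.
  have -> : ((r - s)%:E = mu `[s, r[)%E.
    rewrite /mu lebesgue_measure_itv /= lte_fin; case: ltP => [_|rs]; first by rewrite EFinB.
    have -> : r = s by apply/eqP; rewrite eq_le rs sr.
    by rewrite subrr.
  apply: (@le_trans _ _ (mu `[s, r[ + mu (U `&` `[a, s[))%E).
  exact: leeD (lexx _) H3.
  have mI : measurable (U `&` `[a, s[) by apply: measurableI; [exact: mU|exact: measurable_itv].
  rewrite -measureU //; last first.
  + apply/seteqP; split=> // x /= []; rewrite /= !in_itv /= => /andP[sx _] [_ /andP[_ xs]].
    by move: (lt_le_trans xs sx); rewrite ltxx.
  rewrite /mu; apply: le_measure; rewrite ?inE.
  + by apply: measurableU => //; exact: measurable_itv.
  + by apply: measurableI; [exact: mU|exact: measurable_itv].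
  move=> x [xsr|[xU]]; rewrite /= !in_itv /=.
  + split; first exact: sU.
    move: xsr; rewrite /= in_itv /= => /andP[sx ->]; rewrite andbT; exact: le_trans sx.
  + move=> /andP[ax xs]; split=> //.
    by rewrite ax (lt_le_trans xs sr).
- rewrite big_cons /=.
  apply: (le_trans (ler_distD (f s) (f r) (f a))).
  have : e * (s - a) <= e * (r - a) by apply: ler_wpM2l => //; lra.
  move: H4; lra.
Qed.


Lemma PP_mono (s r : R) : measurable U -> s <= r -> `|f r - f s| <= e * (r - s) -> PP s -> PP r.
Proof.
move=> mU sr hfs [l [H1 H2 H3 H4]]; exists l; split=> //.
- move=> p pl; have [? [? ?]] := H1 p pl; split=> //; split=> //; exact: le_trans sr.
- apply: (le_trans H3); rewrite /mu; apply: le_measure; rewrite ?inE.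
  + by apply: measurableI; [exact: mU|exact: measurable_itv].
  + by apply: measurableI; [exact: mU|exact: measurable_itv].
  move=> x [xU]; rewrite /= !in_itv /= => /andP[-> xs]; split=> //.
  exact: lt_le_trans sr.
- apply: (le_trans (ler_distD (f s) (f r) (f a))); move: H4 hfs; lra.
Qed.

Lemma PP_a : PP a.
Proof.
exists [::]; split => //.
- by rewrite big_nil; apply: measure_ge0.
- by rewrite !subrr normr0 big_nil mulr0 addr0.
Qed.
End K.


Lemma deriv0_bound (R : realType) (f : R -> R) (x : R) :
  is_derive x (1:R) f (0:R) -> forall e : R, 0 < e ->
  exists2 h : R, 0 < h & forall y, `|y - x| < h -> `|f y - f x| <= e * `|y - x|.
Proof.
move=> [df D0] e e0.
have C : (fun h : R => h^-1 *: ((f \o shift x) (h *: 1) - f x)) @ 0^' --> 'D_1 f x.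
  exact: df.
rewrite D0 in C.
move: C => /cvgr0Pnorm_lt /(_ e e0).
rewrite near_withinE => /nbhs_ballP [r /= r0 H].
exists r => // y yx.
have [->|yx0] := eqVneq y x; first by rewrite !subrr normr0 mulr0.
have hy : ball (0:R) r (y - x) by rewrite /ball /= sub0r normrN.
have := H _ hy; rewrite subr_eq0 => /(_ yx0) /=.
rewrite -[_%:A]/((y-x)*1) mulr1 subrK.
rewrite normrM normrV ?unitfE ?normr_eq0 ?subr_eq0 // => lt.
rewrite -ler_pdivrMr ?normr_gt0 ?subr_eq0 // mulrC; exact: ltW.
Qed.

Lemma AC_seq (R : realType) (a b : R) (f : R -> R) : abs_cont_on a b f ->
  forall e : R, 0 < e -> exists2 del : R, 0 < del &
  forall l : seq (R * R), (forall p, p \in l -> a <= p.1 /\ p.1 <= p.2 /\ p.2 <= b) ->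
  pairwise (@novl R) l -> \sum_(p <- l) (p.2 - p.1) < del ->
  \sum_(p <- l) `|f p.2 - f p.1| < e.
Proof.
move=> ac e e0; have [del del0 H] := ac e e0; exists del => // l Hl pl sl.
pose x := fun i : 'I_(size l) => (nth (0,0) l i).1.
pose y := fun i : 'I_(size l) => (nth (0,0) l i).2.
have := H (size l) x y.
rewrite (big_nth (0,0)) big_mkord; apply.
- move=> i; apply: Hl; exact: mem_nth.
- move=> i j ij; move/pairwiseP: pl => /(_ (0,0)) pl.
  have [lt|gt|eq] := ltngtP i j.
  + have := pl i j (ltn_ord i) (ltn_ord j) lt; rewrite /novl => /orP[] ->; auto.
  + have := pl j i (ltn_ord j) (ltn_ord i) gt; rewrite /novl => /orP[] ->; auto.
  + by move: ij; rewrite (val_inj eq) eqxx.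
- by move: sl; rewrite (big_nth (0,0)) big_mkord.
Qed.

Lemma key (R : realType) (a b : R) (f : R -> R) (N : set R) :
  measurable N -> lebesgue_measure N = 0%E -> abs_cont_on a b f ->
  (forall x, a <= x -> x <= b -> ~ N x -> is_derive x (1:R) f 0) ->
  forall t, a <= t -> t <= b -> f t = f a.
Proof.
move=> mN N0 ac hd t at_ tb.
suff H : forall e, 0 < e -> `|f t - f a| <= e * (t - a + 1).
  apply/eqP; rewrite -subr_eq0 -normr_le0; apply/ler_addgt0Pr => e' e'0.
  have ta1 : 0 < t - a + 1 by lra.
  have := H (e' / (t - a + 1)) (divr_gt0 e'0 ta1).
  by rewrite divfK ?gt_eqF // add0r.
move=> e e0.
have [del del0 Hd] := @AC_seq R a b f ac e e0.
have [U [oU NU mUN]] : exists U : set R, [/\ open U , N `<=` U & (lebesgue_measure (U `\` N) < del%:E)%E].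
  apply: lebesgue_regularity_outer => //.
  have NN : (lebesgue_measure N = 0)%E by exact: N0.
  apply: (@le_lt_trans _ _ 0%E); last exact: ltry.
  have NN' : (lebesgue_measure N <= 0)%E by rewrite NN.
  exact: NN'.
have mU : measurable U by exact: open_measurable.
have muU : (lebesgue_measure U < del%:E)%E.
  rewrite -(setDUK NU) measureU //; last exact: setDIK.
  rewrite [X in (X + _)%E](_ : _ = 0%E); first by rewrite add0e.
  exact: N0.
by apply: measurableD.
have e0' : 0 <= e by exact: ltW.
pose S := [set s | (a <= s <= t) /\ PP R a f U e s].
have Sa : S a by split; [rewrite lexx at_|exact: PP_a].
have ubS : ubound S t by move=> s [/andP[_ ->]].
have hS : has_sup S by split; [exists a|exists t].
pose c := sup S.
have ac_ : a <= c := sup_upper_bound hS Sa.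
have ct : c <= t := ge_sup (hS.1) ubS.
have step : exists2 h : R, 0 < h & forall s r, S s -> c - h < s -> c <= r -> r < c + h -> PP R a f U e r.
  case: (pselect (N c)) => Nc.
  - have := NU c Nc; move: oU; rewrite openE => oU /oU /nbhs_ballP [h /= h0 hU].
    exists h => // s r Ss hs cr rh.
    have sc : s <= c := sup_upper_bound hS Ss.
    case: Ss => /andP[as_ st] Ps.
    apply: (@PP_ext R a f U e s r e0' mU as_ (le_trans sc cr)) => // x; rewrite /= in_itv /= => /andP[sx xr].
    apply: hU; rewrite /ball /= ltr_distlC; apply/andP; split; lra.
  - have := hd c ac_ (le_trans ct tb) Nc => /deriv0_bound /(_ e e0) [h h0 hb].
    exists h => // s r Ss hs cr rh.
    have sc : s <= c := sup_upper_bound hS Ss.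
    case: Ss => /andP[as_ st] Ps.
    apply: (@PP_mono R a f U e s r mU (le_trans sc cr) _ Ps).
    have h1 : `|r - c| < h by rewrite ltr_distlC; apply/andP; split; lra.
    have h2 : `|s - c| < h by rewrite ltr_distlC; apply/andP; split; lra.
    have := hb r h1; have := hb s h2.
    rewrite (ger0_norm (_ : 0 <= r - c)); last lra.
    rewrite (ler0_norm (_ : s - c <= 0)); last lra.
    move=> b1 b2; apply: (le_trans (ler_distD (f c) (f r) (f s))).
    rewrite (distrC (f c)); lra.
have [h h0 st] := step.
have [s Ss hs] := sup_adherent h0 hS.
have Pc : PP R a f U e c by apply: (st s c Ss hs (lexx c)); lra.
have ceq : c = t.
  apply/eqP; rewrite eq_le ct /= leNgt; apply/negP => lt.
  pose r := Num.min t (c + h / 2).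
  have cr : c < r by rewrite /r lt_min lt (_ : c < c + h / 2) //; lra.
  have Sr : S r.
    split; first by rewrite (le_trans ac_ (ltW cr)) /= /r ge_min lexx.
    apply: (st s r Ss hs (ltW cr)).
    have : r <= c + h / 2 by rewrite /r ge_min lexx orbT.
    lra.
  have := sup_upper_bound hS Sr; rewrite -/c leNgt cr //.
rewrite ceq in Pc; case: Pc => l [H1 H2 H3 H4].
have sl : \sum_(p <- l) (p.2 - p.1) < del.
  rewrite -lte_fin; apply: (le_lt_trans H3); apply: le_lt_trans muU.
  apply: le_measure; rewrite ?inE.
  + by apply: measurableI; [exact: mU|exact: measurable_itv].
  + exact: mU.
  by move=> x [].
have := Hd l _ H2 sl.
have : forall p, p \in l -> a <= p.1 /\ p.1 <= p.2 /\ p.2 <= b.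
  by move=> p /H1 [? [? ?]]; split=> //; split=> //; exact: le_trans tb.
move=> Hb /(_ Hb); move: H4; lra.
Qed.

Lemma AC2 (R : realType) (a b : R) (F f g : R -> R) (K : R) : 0 <= K ->
  abs_cont_on a b f -> abs_cont_on a b g ->
  (forall x y, a <= x -> x <= y -> y <= b ->
     `|F y - F x| <= K * (`|f y - f x| + `|g y - g x|)) ->
  abs_cont_on a b F.
Proof.
move=> K0 acf acg HF e e0.
have e'0 : 0 < e / (2 * (K + 1)) by apply: divr_gt0 => //; lra.
have [d1 d10 H1] := acf _ e'0.
have [d2 d20 H2] := acg _ e'0.
exists (Num.min d1 d2); first by rewrite lt_min d10 d20.
move=> n x y Hxy Hno Hs.
have s1 : \sum_(i < n) (y i - x i) < d1 by apply: (lt_le_trans Hs); rewrite ge_min lexx.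
have s2 : \sum_(i < n) (y i - x i) < d2 by apply: (lt_le_trans Hs); rewrite ge_min lexx orbT.
have A := H1 n x y Hxy Hno s1.
have B := H2 n x y Hxy Hno s2.
apply: (le_lt_trans (y := K * (\sum_(i < n) `|f (y i) - f (x i)| + \sum_(i < n) `|g (y i) - g (x i)|))).
  rewrite -big_split mulr_sumr; apply: ler_sum => i _.
  by have [? [? ?]] := Hxy i; apply: HF.
set S1 := \sum_(i < n) _ in A *; set S2 := \sum_(i < n) _ in B *.
have S10 : 0 <= S1 by apply: sumr_ge0 => i _.
have S20 : 0 <= S2 by apply: sumr_ge0 => i _.
have -> : e = (K + 1) * (2 * (e / (2 * (K + 1)))).
  by field; lra.
set e' := e / (2 * (K + 1)) in A B *.
apply: (le_lt_trans (y := (K + 1) * (S1 + S2))).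
  by apply: ler_wpM2r; lra.
by rewrite ltr_pM2l; lra.
Qed.

Lemma AC_bdd (R : realType) (a b : R) (f : R -> R) : abs_cont_on a b f ->
  exists2 M : R, 0 <= M & forall x, a <= x -> x <= b -> `|f x| <= M.
Proof.
move=> ac; have [d d0 Hd] := ac 1 ltr01.
have key : forall k : nat, forall x, a <= x -> x <= b -> x <= a + k%:R * (d / 2) ->
   `|f x - f a| <= k%:R.
  elim=> [|k IH] x ax xb xk.
    have -> : x = a by apply/eqP; rewrite eq_le ax andbT; move: xk; rewrite mul0r addr0.
    by rewrite subrr normr0.
  have [xk'|xk'] := leP x (a + k%:R * (d / 2)); first by apply: (le_trans (IH x ax xb xk')); rewrite ler_nat.
  set x' := a + k%:R * (d / 2) in xk'.
  have ex' : x' = a + k%:R * (d / 2) by [].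
  clearbody x'.
  have k0 : 0 <= k%:R * (d / 2) :> R by apply: mulr_ge0 => //; lra.
  have ax' : a <= x' by rewrite ex'; lra.
  have hx' : `|f x' - f a| <= k%:R by apply: IH => //; [exact: le_trans (ltW xk') xb|rewrite ex'].

  have := Hd 1 (fun _ => x') (fun _ => x).
  rewrite !big_ord1 => H.
  have : `|f x - f x'| < 1.
    apply: H.
    - by move=> _; split=> //; split=> //; exact: ltW.
    - by move=> i j; rewrite !ord1 eqxx.
    - clear -ex' xk d0; move: xk; rewrite ex' -natr1; lra.
  move: hx'; rewrite -natr1 => hx' hh.
  have := ler_distD (f x') (f x) (f a); clear -hx' hh; lra.
have [kk kkP] : exists k : nat, b - a < k%:R * (d / 2).
  exists (Num.trunc ((b - a) / (d / 2))).+1.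
  rewrite -ltr_pdivrMr; last lra.
  exact: truncnS_gt.
exists (`|f a| + kk%:R); first by apply: addr_ge0.
move=> x ax xb.
have xk : x <= a + kk%:R * (d / 2) by clear -kkP xb; lra.
have := key kk x ax xb xk.
have := ler_distD (f a) (f x) 0; rewrite !subr0 => h1 h2; clear -h1 h2; lra.
Qed.

Lemma AC_add (R : realType) (a b : R) (f g : R -> R) :
  abs_cont_on a b f -> abs_cont_on a b g -> abs_cont_on a b (fun t => f t + g t).
Proof.
move=> acf acg; apply: (@AC2 R a b _ f g 1 ler01 acf acg) => x y _ _ _.
rewrite mul1r; have := ler_normD (f y - f x) (g y - g x).
have -> : f y - f x + (g y - g x) = f y + g y - (f x + g x) by ring.
done.
Qed.

Lemma AC_mul (R : realType) (a b : R) (f g : R -> R) :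
  abs_cont_on a b f -> abs_cont_on a b g -> abs_cont_on a b (fun t => f t * g t).
Proof.
move=> acf acg.
have [Mf Mf0 Hf] := @AC_bdd R a b f acf.
have [Mg Mg0 Hg] := @AC_bdd R a b g acg.
apply: (@AC2 R a b _ f g (Mf + Mg) (addr_ge0 Mf0 Mg0) acf acg) => x y ax xy yb.
have -> : f y * g y - f x * g x = f y * (g y - g x) + g x * (f y - f x) by ring.
apply: (le_trans (ler_normD _ _)); rewrite !normrM.
have h1 : `|f y| * `|g y - g x| <= Mf * `|g y - g x|.
  by apply: ler_wpM2r => //; apply: Hf => //; exact: le_trans ax xy.
have h2 : `|g x| * `|f y - f x| <= Mg * `|f y - f x|.
  by apply: ler_wpM2r => //; apply: Hg => //; exact: le_trans yb.
have p1 : 0 <= Mf * `|f y - f x| by apply: mulr_ge0.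
have p2 : 0 <= Mg * `|g y - g x| by apply: mulr_ge0.
rewrite mulrDr !mulrDl; lra.
Qed.

Lemma AC_cst_mul (R : realType) (a b c : R) (f : R -> R) :
  abs_cont_on a b f -> abs_cont_on a b (fun t => c * f t).
Proof.
move=> acf; apply: (@AC2 R a b _ f f `|c| (normr_ge0 c) acf acf) => x y _ _ _.
rewrite -mulrBr normrM; apply: ler_wpM2l => //.
have := normr_ge0 (f y - f x); lra.
Qed.

Lemma AC_sq (R : realType) (a b : R) (f : R -> R) :
  abs_cont_on a b f -> abs_cont_on a b (fun t => f t ^+ 2).
Proof.
move=> acf; have := @AC_mul R a b f f acf acf.
by under [X in abs_cont_on _ _ X -> _]eq_fun do rewrite -expr2.
Qed.

Lemma isdM (R : realType) (f g : R -> R) (x df dg : R) :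
  is_derive x (1:R) f df -> is_derive x (1:R) g dg ->
  is_derive x (1:R) (fun t => f t * g t) (f x * dg + g x * df).
Proof. move=> Hf Hg; exact: (@is_deriveM R R f g x 1 df dg Hf Hg). Qed.

Lemma isdD (R : realType) (f g : R -> R) (x df dg : R) :
  is_derive x (1:R) f df -> is_derive x (1:R) g dg ->
  is_derive x (1:R) (fun t => f t + g t) (df + dg).
Proof. move=> Hf Hg; exact: (@is_deriveD R R R f g x 1 df dg Hf Hg). Qed.

Lemma isdC (R : realType) (c : R) (f : R -> R) (x df : R) :
  is_derive x (1:R) f df -> is_derive x (1:R) (fun t => c * f t) (c * df).
Proof.
move=> Hf; have := @isdM R (cst c) f x 0 df (is_derive_cst c x 1) Hf => /= H.
by apply: (is_derive_eq H); rewrite mulr0 addr0.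
Qed.

Lemma isdX2 (R : realType) (f : R -> R) (x df : R) :
  is_derive x (1:R) f df -> is_derive x (1:R) (fun t => f t ^+ 2) (f x * df + f x * df).
Proof. move=> Hf; exact: (@isdM R f f x df df Hf Hf). Qed.

Lemma to_isd (R : realType) (f : R -> R) (x d : R) :
  derivable f x 1 /\ derive1 f x = d -> is_derive x (1:R) f d.
Proof. by move=> [df <-]; rewrite derive1E; exact: derivableP. Qed.


Lemma ae_get (R : realType) (a b : R) (f g : R -> R) : ae_deriv_on a b f g ->
  exists N : set R, [/\ measurable N, lebesgue_measure N = 0%E &
    forall x, a <= x -> x <= b -> ~ N x -> is_derive x (1:R) f (g x)].
Proof.
case=> N [mN N0 sN]; exists N; split=> // x ax xb Nx.
apply: to_isd; apply: contrapT => nP; apply: Nx; apply: sN => /= H.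
by apply: nP; apply: H; rewrite in_itv /= ax xb.
Qed.

Lemma null_U (R : realType) (A B : set R) : measurable A -> measurable B ->
  lebesgue_measure A = 0%E -> lebesgue_measure B = 0%E ->
  lebesgue_measure (A `|` B) = 0%E.
Proof.
move=> mA mB A0 B0; rewrite measureU0 //.
Qed.


Arguments ae_get {R a b f g}.
Arguments null_U {R A B}.
Arguments AC_cst_mul {R a b c f}.
Arguments AC_add {R a b f g}.
Arguments AC_mul {R a b f g}.
Arguments AC_sq {R a b f}.
Arguments isdC {R c f x df}.
Arguments isdD {R f g x df dg}.
Arguments isdM {R f g x df dg}.
Arguments isdX2 {R f x df}.
Arguments key {R a b f N}.

Theorem proposition2 (R : realType) (w0 : R) (a b : R)
  (ux uy uz bx by_ bz cx cy cz : R -> R) :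
  w0 != 0 ->
  bdd_meas ux -> bdd_meas uy -> bdd_meas uz ->
  abs_cont_on a b bx -> abs_cont_on a b by_ -> abs_cont_on a b bz ->
  abs_cont_on a b cx -> abs_cont_on a b cy -> abs_cont_on a b cz ->
  ae_deriv_on a b bx (fun t => - w0 * cy t - uz t * by_ t + uy t * bz t) ->
  ae_deriv_on a b by_ (fun t => w0 * cx t + uz t * bx t - ux t * bz t) ->
  ae_deriv_on a b bz (fun t => ux t * by_ t - uy t * bx t) ->
  ae_deriv_on a b cx (fun t => - w0 * by_ t + uy t * cz t - uz t * cy t) ->
  ae_deriv_on a b cy (fun t => w0 * bx t - ux t * cz t + uz t * cx t) ->
  ae_deriv_on a b cz (fun t => ux t * cy t - uy t * cx t) ->
  let E := fun t => w0 ^+ 2 / 2 *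
     (bx t ^+ 2 + cx t ^+ 2 + (by_ t ^+ 2 + cy t ^+ 2) + (bz t ^+ 2 + cz t ^+ 2)) in
  let L := fun t => w0 * (bx t * cx t + by_ t * cy t + bz t * cz t) in
  forall s t, s \in `[a, b] -> t \in `[a, b] -> E s = E t /\ L s = L t.
Proof.
move=> w0n _ _ _ abx aby abz acx acy acz dbx dby dbz dcx dcy dcz E L s t sab tab.
have [N1 [m1 z1 h1]] := ae_get dbx.
have [N2 [m2 z2 h2]] := ae_get dby.
have [N3 [m3 z3 h3]] := ae_get dbz.
have [N4 [m4 z4 h4]] := ae_get dcx.
have [N5 [m5 z5 h5]] := ae_get dcy.
have [N6 [m6 z6 h6]] := ae_get dcz.
pose N := N1 `|` N2 `|` N3 `|` N4 `|` N5 `|` N6.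
have mN : measurable N by rewrite /N; repeat apply: measurableU => //.
have N0 : lebesgue_measure N = 0%E.
  rewrite /N; repeat (apply: null_U => //; repeat apply: measurableU => //).
have gd : forall x, a <= x -> x <= b -> ~ N x ->
   is_derive x (1:R) bx (- w0 * cy x - uz x * by_ x + uy x * bz x) /\
       is_derive x (1:R) by_ (w0 * cx x + uz x * bx x - ux x * bz x) /\
       is_derive x (1:R) bz (ux x * by_ x - uy x * bx x) /\
       is_derive x (1:R) cx (- w0 * by_ x + uy x * cz x - uz x * cy x) /\
       is_derive x (1:R) cy (w0 * bx x - ux x * cz x + uz x * cx x) /\
       is_derive x (1:R) cz (ux x * cy x - uy x * cx x).
  move=> x ax xb Nx; split; [|split; [|split; [|split; [|split]]]].
  - by apply: h1 => // H; apply: Nx; rewrite /N; do 5 left.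
  - by apply: h2 => // H; apply: Nx; rewrite /N; do 4 left; right.
  - by apply: h3 => // H; apply: Nx; rewrite /N; do 3 left; right.
  - by apply: h4 => // H; apply: Nx; rewrite /N; do 2 left; right.
  - by apply: h5 => // H; apply: Nx; rewrite /N; left; right.
  - by apply: h6 => // H; apply: Nx; rewrite /N; right.
have ACE : abs_cont_on a b E.
  rewrite /E; apply: AC_cst_mul; apply: AC_add; apply: AC_add;
    try apply: AC_add; apply: AC_sq => //.
have ACL : abs_cont_on a b L.
  rewrite /L; apply: AC_cst_mul; apply: AC_add; try apply: AC_add; apply: AC_mul => //.
have DE : forall x, a <= x -> x <= b -> ~ N x -> is_derive x (1:R) E 0.
  move=> x ax xb Nx; have [D1 [D2 [D3 [D4 [D5 D6]]]]] := gd x ax xb Nx.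
  have := @isdC R (w0 ^+ 2 / 2) _ _ _ (isdD (isdD (isdD (isdX2 D1) (isdX2 D4))
     (isdD (isdX2 D2) (isdX2 D5))) (isdD (isdX2 D3) (isdX2 D6))).
  move=> H; apply: (is_derive_eq H); ring.
have DL : forall x, a <= x -> x <= b -> ~ N x -> is_derive x (1:R) L 0.
  move=> x ax xb Nx; have [D1 [D2 [D3 [D4 [D5 D6]]]]] := gd x ax xb Nx.
  have := @isdC R w0 _ _ _ (isdD (isdD (isdM D1 D4) (isdM D2 D5)) (isdM D3 D6)).
  move=> H; apply: (is_derive_eq H); ring.
move: sab tab; rewrite !in_itv /= => /andP[as_ sb] /andP[at_ tb].
split.
- by rewrite (key mN N0 ACE DE s as_ sb) (key mN N0 ACE DE t at_ tb).
- by rewrite (key mN N0 ACL DL s as_ sb) (key mN N0 ACL DL t at_ tb).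
Qed.
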